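(* Let $C\subseteq\mathbb{R}^2$ be a strictly convex closed differentiable curve, and let $h\colon C\to C$ be the map sending $p\in C$ to the unique point of intersection of the normal line to $C$ at $p$ with $C\setminus\{p\}$. Then $h$ has degree one; in particular $h$ is surjective.
   Context: A curve $C\subseteq\mathbb{R}^2$ is strictly convex if $C=\partial Y$ for some $Y\subseteq\mathbb{R}^2$ such that $ty+(1-t)y'$ lies in the interior of $Y$ for all $y,y'\in Y$, $t\in(0,1)$. The normal line at $p$ is the line through $p$ perpendicular to the tangent line of $C$ at $p$; the map $h$ is continuous. *)

(* Defs.v *)
From Stdlib Require Import Reals.
Open Scope R_scope.

Definition pt : Type := (R * R)%type.

Definition padd (p q : pt) : pt := (fst p + fst q, snd p + snd q).
Definition pscale (t : R) (p : pt) : pt := (t * fst p, t * snd p).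

Definition dist2 (p q : pt) : R :=
  sqrt ((fst p - fst q) ^ 2 + (snd p - snd q) ^ 2).

Definition interior2 (Y : pt -> Prop) (p : pt) : Prop :=
  exists e, 0 < e /\ forall q, dist2 q p < e -> Y q.

Definition boundary2 (Y : pt -> Prop) (p : pt) : Prop :=
  forall e, 0 < e ->
    (exists q, Y q /\ dist2 q p < e) /\ (exists q, ~ Y q /\ dist2 q p < e).

Definition strictly_convex_set (Y : pt -> Prop) : Prop :=
  forall y y' t, Y y -> Y y' -> y <> y' -> 0 < t < 1 ->
    interior2 Y (padd (pscale t y) (pscale (1 - t) y')).

Definition strictly_convex_curve (C : pt -> Prop) : Prop :=
  exists Y : pt -> Prop, strictly_convex_set Y /\ (forall p, C p <-> boundary2 Y p).

(* (gx, gy) : R -> R^2 is a regular differentiable parametrization of the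
   closed (simple) curve C: 1-periodic, injective on one period, onto C,
   differentiable with nowhere-vanishing derivative. *)
Definition closed_diff_param (C : pt -> Prop) (gx gy : R -> R) : Prop :=
  (forall t, gx (t + 1) = gx t /\ gy (t + 1) = gy t) /\
  (forall s t, 0 <= s < 1 -> 0 <= t < 1 -> (gx s, gy s) = (gx t, gy t) -> s = t) /\
  (forall p, C p <-> exists t, p = (gx t, gy t)) /\
  (forall t, exists dx dy, derivable_pt_lim gx t dx /\ derivable_pt_lim gy t dy
                           /\ (dx, dy) <> (0, 0)).

Definition on_normal_line (gx gy : R -> R) (t : R) (q : pt) : Prop :=
  forall dx dy, derivable_pt_lim gx t dx -> derivable_pt_lim gy t dy ->
    (fst q - gx t) * dx + (snd q - gy t) * dy = 0.

Definition continuous_on_curve (C : pt -> Prop) (h : pt -> pt) : Prop :=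
  forall p, C p -> forall e, 0 < e -> exists d, 0 < d /\
    forall q, C q -> dist2 q p < d -> dist2 (h q) (h p) < e.

(* h : C -> C has degree one (w.r.t. the parametrization R/Z ~ C, t |-> gamma t):
   the induced circle map admits a continuous lift F : R -> R with
   h (gamma t) = gamma (F t) and F (t + 1) = F t + 1. *)
Definition degree_one (gx gy : R -> R) (h : pt -> pt) : Prop :=
  exists F : R -> R,
    (forall t, continuity_pt F t) /\
    (forall t, h (gx t, gy t) = (gx (F t), gy (F t))) /\
    (forall t, F (t + 1) = F t + 1).

Definition surjective_on (C : pt -> Prop) (h : pt -> pt) : Prop :=
  forall q, C q -> exists p, C p /\ h p = q.

(* Main.v *)
Require Import Defs.
From Stdlib Require Import Reals Lra Lia ZArith ClassicalEpsilon Classical.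
Open Scope R_scope.

Definition N1 (p q : pt) : R := Rabs (fst p - fst q) + Rabs (snd p - snd q).

Lemma dist2_le_N1 p q : dist2 p q <= N1 p q.
Proof.
  unfold dist2, N1.
  set (a := fst p - fst q). set (b := snd p - snd q).
  rewrite <- (sqrt_Rsqr (Rabs a + Rabs b)) by (pose proof (Rabs_pos a); pose proof (Rabs_pos b); lra).
  apply sqrt_le_1_alt. unfold Rsqr.
  pose proof (Rabs_pos a); pose proof (Rabs_pos b).
  replace (a^2) with (Rabs a * Rabs a) by (rewrite <- Rabs_mult; simpl; rewrite Rmult_1_r; apply Rabs_pos_eq; nra).
  replace (b^2) with (Rabs b * Rabs b) by (rewrite <- Rabs_mult; simpl; rewrite Rmult_1_r; apply Rabs_pos_eq; nra).
  nra.
Qed.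

Lemma abs_le_dist2 p q : Rabs (fst p - fst q) <= dist2 p q /\ Rabs (snd p - snd q) <= dist2 p q.
Proof.
  unfold dist2. set (a := fst p - fst q). set (b := snd p - snd q).
  split.
  - rewrite <- sqrt_Rsqr_abs. apply sqrt_le_1_alt. unfold Rsqr. nra.
  - rewrite <- sqrt_Rsqr_abs. apply sqrt_le_1_alt. unfold Rsqr. nra.
Qed.

Lemma N1_triang p q r : N1 p r <= N1 p q + N1 q r.
Proof.
  unfold N1.
  pose proof (Rabs_triang (fst p - fst q) (fst q - fst r)).
  pose proof (Rabs_triang (snd p - snd q) (snd q - snd r)).
  replace (fst p - fst r) with ((fst p - fst q) + (fst q - fst r)) by ring.
  replace (snd p - snd r) with ((snd p - snd q) + (snd q - snd r)) by ring.
  lra.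
Qed.

Lemma N1_sym p q : N1 p q = N1 q p.
Proof. unfold N1. rewrite (Rabs_minus_sym (fst p)), (Rabs_minus_sym (snd p)). ring. Qed.

Lemma N1_pos p q : p <> q -> 0 < N1 p q.
Proof.
  intros H. unfold N1. destruct p as [a b], q as [c d]; simpl.
  pose proof (Rabs_pos (a-c)); pose proof (Rabs_pos (b-d)).
  destruct (Req_dec a c); destruct (Req_dec b d); subst.
  - exfalso; auto.
  - assert (0 < Rabs (b-d)) by (apply Rabs_pos_lt; lra). lra.
  - assert (0 < Rabs (a-c)) by (apply Rabs_pos_lt; lra). lra.
  - assert (0 < Rabs (a-c)) by (apply Rabs_pos_lt; lra). lra.
Qed.

Lemma pos_min (f : R -> R) a b : (forall c, continuity_pt f c) ->
  (forall c, a <= c <= b -> 0 < f c) -> exists m, 0 < m /\ forall c, a <= c <= b -> m <= f c.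
Proof.
  intros Hc Hp. destruct (Rle_lt_dec a b).
  - destruct (continuity_ab_min f a b r (fun c _ => Hc c)) as [mx [H1 H2]].
    exists (f mx). split; auto.
  - exists 1. split; [lra|]. intros; lra.
Qed.

Lemma per_nat (gx gy : R -> R) : (forall t, gx (t + 1) = gx t /\ gy (t + 1) = gy t) ->
  forall n x, gx (x + INR n) = gx x /\ gy (x + INR n) = gy x.
Proof.
  intros Hp n. induction n as [|n IH]; intros x.
  - simpl. rewrite Rplus_0_r. auto.
  - rewrite S_INR. replace (x + (INR n + 1)) with ((x + INR n) + 1) by ring.
    destruct (Hp (x + INR n)) as [A B]. rewrite A, B. apply IH.
Qed.

Lemma per_Z (gx gy : R -> R) : (forall t, gx (t + 1) = gx t /\ gy (t + 1) = gy t) ->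
  forall k x, gx (x + IZR k) = gx x /\ gy (x + IZR k) = gy x.
Proof.
  intros Hp k x. destruct k as [|p|p].
  - simpl. rewrite Rplus_0_r. auto.
  - rewrite <- positive_nat_Z, <- INR_IZR_INZ. apply per_nat; auto.
  - replace (IZR (Z.neg p)) with (- INR (Pos.to_nat p))
      by (rewrite INR_IZR_INZ, positive_nat_Z; rewrite <- Pos2Z.opp_pos, opp_IZR; reflexivity).
    destruct (per_nat gx gy Hp (Pos.to_nat p) (x + - INR (Pos.to_nat p))) as [A B].
    replace (x + - INR (Pos.to_nat p) + INR (Pos.to_nat p)) with x in A, B by ring.
    auto.
Qed.

Lemma frac_ex r : exists k : Z, 0 <= r - IZR k < 1.
Proof.
  exists (Int_part r). destruct (base_Int_part r). lra.
Qed.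

Lemma IZR_small k : -1 < IZR k < 1 -> k = 0%Z.
Proof.
  intros [A B]. apply lt_IZR in B. change (-1) with (IZR (-1)) in A. apply lt_IZR in A. lia.
Qed.

Lemma G_eq_int (gx gy : R -> R) :
  (forall t, gx (t + 1) = gx t /\ gy (t + 1) = gy t) ->
  (forall s t, 0 <= s < 1 -> 0 <= t < 1 -> (gx s, gy s) = (gx t, gy t) -> s = t) ->
  forall u v, (gx u, gy u) = (gx v, gy v) -> exists k : Z, v - u = IZR k.
Proof.
  intros Hp Hi u v E.
  destruct (frac_ex u) as [a Ha]. destruct (frac_ex v) as [b Hb].
  assert (Eu : forall x (k:Z), (gx (x - IZR k), gy (x - IZR k)) = (gx x, gy x)).
  { intros x k. destruct (per_Z gx gy Hp k (x - IZR k)) as [A B].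
    replace (x - IZR k + IZR k) with x in A, B by ring. rewrite A, B. reflexivity. }
  assert (u - IZR a = v - IZR b).
  { apply Hi; auto. rewrite Eu, Eu. exact E. }
  exists (b - a)%Z. rewrite minus_IZR. lra.
Qed.

Lemma cont_eps f x : continuity_pt f x <->
  forall e, 0 < e -> exists d, 0 < d /\ forall y, Rabs (y - x) < d -> Rabs (f y - f x) < e.
Proof.
  unfold continuity_pt, continue_in, limit1_in, limit_in, D_x, no_cond; simpl; unfold R_dist.
  split.
  - intros H e He. destruct (H e He) as [d [Hd H']]. exists d; split; auto.
    intros y Hy. destruct (Req_dec x y). subst. rewrite Rminus_diag, Rabs_R0; auto.
    apply H'; auto.
  - intros H e He. destruct (H e He) as [d [Hd H']]. exists d; split; auto.
    intros y [_ Hy]; auto.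
Qed.

Lemma cont_shift_abs f a b c : continuity_pt f (a + c) ->
  continuity_pt (fun s => Rabs (f (a + s) - b)) c.
Proof.
  rewrite !cont_eps. intros H e He. destruct (H e He) as [d [Hd H']].
  exists d; split; auto. intros y Hy.
  eapply Rle_lt_trans; [apply Rabs_triang_inv2|].
  replace (f (a + y) - b - (f (a + c) - b)) with (f (a+y) - f (a+c)) by ring.
  apply H'. replace (a + y - (a + c)) with (y - c) by ring. auto.
Qed.

Theorem lemma6p3 (C : pt -> Prop) (gx gy : R -> R) (h : pt -> pt) :
  strictly_convex_curve C ->
  closed_diff_param C gx gy ->
  (forall t, C (h (gx t, gy t)) /\ h (gx t, gy t) <> (gx t, gy t) /\
             on_normal_line gx gy t (h (gx t, gy t))) ->
  continuous_on_curve C h ->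
  degree_one gx gy h /\ surjective_on C h.
Proof.
  intros _ [Hp [Hi [HC Hd]]] Hh Hcont.
  assert (Hcg : forall t, continuity_pt gx t /\ continuity_pt gy t).
  { intros t. destruct (Hd t) as [dx [dy [A [B _]]]]. split.
    - apply (derivable_continuous_pt gx t (exist _ dx A)).
    - apply (derivable_continuous_pt gy t (exist _ dy B)). }
  assert (HP1 : forall x, (gx (x + 1), gy (x + 1)) = (gx x, gy x)).
  { intros x. destruct (Hp x) as [A B]. rewrite A, B; reflexivity. }
  assert (Hex : forall t, exists s, 0 < s < 1 /\ (gx (t + s), gy (t + s)) = h (gx t, gy t)).
  { intros t. destruct (Hh t) as [HCt [Hne _]].
    destruct (proj1 (HC _) HCt) as [u Hu].
    destruct (frac_ex (u - t)) as [k Hk].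
    assert (E : (gx (t + (u - t - IZR k)), gy (t + (u - t - IZR k))) = h (gx t, gy t)).
    { rewrite Hu. replace (t + (u - t - IZR k)) with (u - IZR k) by ring.
      destruct (per_Z gx gy Hp k (u - IZR k)) as [A B].
      replace (u - IZR k + IZR k) with u in A, B by ring. rewrite A, B. reflexivity. }
    exists (u - t - IZR k). split; auto.
    destruct (Req_dec (u - t - IZR k) 0) as [E0|E0].
    - exfalso. apply Hne. rewrite <- E, E0, Rplus_0_r. reflexivity.
    - lra. }
  assert (Huniq : forall t s1 s2, -1 < s1 - s2 < 1 ->
            (gx (t + s1), gy (t + s1)) = (gx (t + s2), gy (t + s2)) -> s1 = s2).
  { intros t s1 s2 Hs E. destruct (G_eq_int gx gy Hp Hi _ _ E) as [k Hk].
    assert (k = 0%Z) by (apply IZR_small; lra). subst k. simpl in Hk. lra. }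
  set (g := fun t => proj1_sig (constructive_indefinite_description _ (Hex t))).
  assert (Hg : forall t, 0 < g t < 1 /\ (gx (t + g t), gy (t + g t)) = h (gx t, gy t)).
  { intros t. unfold g. destruct (constructive_indefinite_description _ (Hex t)) as [s Hs]. exact Hs. }
  assert (Hg1 : forall t, g (t + 1) = g t).
  { intros t. destruct (Hg t) as [A B]. destruct (Hg (t+1)) as [C1 D].
    apply (Huniq t). lra.
    rewrite B. rewrite <- HP1. replace (t + g (t + 1) + 1) with (t + 1 + g (t + 1)) by ring.
    rewrite D, HP1. reflexivity. }
  assert (HHc : forall t0 e, 0 < e -> exists d, 0 < d /\ forall t, Rabs (t - t0) < d ->
             N1 (h (gx t, gy t)) (h (gx t0, gy t0)) < e).
  { intros t0 e He.
    assert (HCt0 : C (gx t0, gy t0)) by (apply HC; exists t0; reflexivity).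
    destruct (Hcont _ HCt0 (e/2)) as [d1 [Hd1 Hd1']]; [lra|].
    destruct (Hcg t0) as [Cx Cy]. rewrite cont_eps in Cx, Cy.
    destruct (Cx (d1/2)) as [a [Ha Ha']]; [lra|].
    destruct (Cy (d1/2)) as [b [Hb Hb']]; [lra|].
    exists (Rmin a b). split; [apply Rmin_pos; auto|].
    intros t Ht.
    assert (Hq : C (gx t, gy t)) by (apply HC; exists t; reflexivity).
    assert (HN : N1 (gx t, gy t) (gx t0, gy t0) < d1).
    { unfold N1; simpl.
      assert (Rabs (gx t - gx t0) < d1/2) by (apply Ha'; pose proof (Rmin_l a b); lra).
      assert (Rabs (gy t - gy t0) < d1/2) by (apply Hb'; pose proof (Rmin_r a b); lra).
      lra. }
    pose proof (Hd1' _ Hq (Rle_lt_trans _ _ _ (dist2_le_N1 _ _) HN)) as Hh2.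
    destruct (abs_le_dist2 (h (gx t, gy t)) (h (gx t0, gy t0))). unfold N1. lra. }
  assert (Hgc : forall t0, continuity_pt g t0).
  { intros t0. rewrite cont_eps. intros e He.
    set (g0 := g t0). set (q0 := h (gx t0, gy t0)).
    destruct (Hg t0) as [Hg0 Eg0]. fold g0 in Hg0, Eg0.
    set (f := fun s => Rabs (gx (t0 + s) - fst q0) + Rabs (gy (t0 + s) - snd q0)).
    assert (Hfc : forall c, continuity_pt f c).
    { intros c. apply continuity_pt_plus.
      - apply cont_shift_abs. apply Hcg.
      - apply cont_shift_abs. apply Hcg. }
    assert (Hfp : forall s, 0 <= s <= 1 -> e <= Rabs (s - g0) -> 0 < f s).
    { intros s Hs Hse. unfold f. change (0 < N1 (gx (t0 + s), gy (t0 + s)) q0).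
      apply N1_pos. intros E. unfold q0 in E. rewrite <- Eg0 in E.
      assert (s = g0) by (apply (Huniq t0); [lra | exact E]).
      subst s. rewrite Rminus_diag, Rabs_R0 in Hse. lra. }
    destruct (pos_min f 0 (g0 - e) Hfc) as [m1 [Hm1 Hm1']].
    { intros c Hc. apply Hfp. lra. rewrite Rabs_left1; lra. }
    destruct (pos_min f (g0 + e) 1 Hfc) as [m2 [Hm2 Hm2']].
    { intros c Hc. apply Hfp. lra. rewrite Rabs_pos_eq; lra. }
    set (m := Rmin m1 m2).
    assert (Hm : 0 < m) by (apply Rmin_pos; auto).
    assert (Hmle : forall s, 0 <= s <= 1 -> e <= Rabs (s - g0) -> m <= f s).
    { intros s Hs Hse. destruct (Rle_lt_dec s g0).
      - rewrite Rabs_left1 in Hse by lra. pose proof (Rmin_l m1 m2). pose proof (Hm1' s ltac:(lra)). unfold m. lra.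
      - rewrite Rabs_pos_eq in Hse by lra. pose proof (Rmin_r m1 m2). pose proof (Hm2' s ltac:(lra)). unfold m. lra. }
    assert (Xx := Heine gx (fun c => t0 - 1 <= c <= t0 + 2) (compact_P3 _ _) (fun x _ => proj1 (Hcg x))).
    assert (Xy := Heine gy (fun c => t0 - 1 <= c <= t0 + 2) (compact_P3 _ _) (fun x _ => proj2 (Hcg x))).
    assert (Hm4 : 0 < m/4) by lra.
    destruct (Xx (mkposreal _ Hm4)) as [dx Hdx].
    destruct (Xy (mkposreal _ Hm4)) as [dy Hdy].
    destruct (HHc t0 (m/2)) as [d2 [Hd2 Hd2']]; [lra|].
    pose proof (cond_pos dx). pose proof (cond_pos dy).
    exists (Rmin (Rmin 1 d2) (Rmin dx dy)).
    split. { repeat apply Rmin_pos; lra. }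
    intros x Hx.
    pose proof (Rmin_l (Rmin 1 d2) (Rmin dx dy)). pose proof (Rmin_r (Rmin 1 d2) (Rmin dx dy)).
    pose proof (Rmin_l 1 d2). pose proof (Rmin_r 1 d2). pose proof (Rmin_l dx dy). pose proof (Rmin_r dx dy).
    fold g0.
    destruct (Rlt_dec (Rabs (g x - g0)) e) as [ok|nok]; [exact ok|exfalso].
    set (s := g x). destruct (Hg x) as [Hs Es]. fold s in Hs, Es.
    apply Rnot_lt_le in nok. assert (F1 : m <= f s). { apply Hmle. destruct Hs; split; left; assumption. exact nok. }
    assert (Hax : Rabs (x - t0) < 1) by lra.
    apply Rabs_def2 in Hax.
    assert (F2 : Rabs (gx (t0 + s) - gx (x + s)) < m/4).
    { apply (Hdx (t0 + s) (x + s)); try lra.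
      replace (t0 + s - (x + s)) with (- (x - t0)) by ring. rewrite Rabs_Ropp. simpl. lra. }
    assert (F3 : Rabs (gy (t0 + s) - gy (x + s)) < m/4).
    { apply (Hdy (t0 + s) (x + s)); try lra.
      replace (t0 + s - (x + s)) with (- (x - t0)) by ring. rewrite Rabs_Ropp. simpl. lra. }
    assert (F4 : N1 (h (gx x, gy x)) q0 < m/2) by (apply Hd2'; lra).
    pose proof (N1_triang (gx (t0 + s), gy (t0 + s)) (gx (x + s), gy (x + s)) q0) as T.
    rewrite <- Es in F4. unfold f in F1. unfold N1 in T, F4; simpl in T, F4.
    lra. }
  set (F := fun t => t + g t).
  assert (HFc : forall t, continuity_pt F t).
  { intros t. unfold F. apply (continuity_pt_plus (fun t => t) g).
    - rewrite cont_eps. intros e He. exists e. split; auto.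
    - apply Hgc. }
  assert (HF1 : forall t, h (gx t, gy t) = (gx (F t), gy (F t))).
  { intros t. unfold F. symmetry. apply Hg. }
  split.
  - exists F. split; [exact HFc|]. split; [exact HF1|].
    intros t. unfold F. rewrite Hg1. ring.
  - intros q Hq. destruct (proj1 (HC q) Hq) as [u Hu].
    destruct (IVT (fun t => F t - u) (u - 1) u) as [z [Hz Ez]].
    + intros t. apply continuity_pt_minus; [apply HFc|]. apply continuity_pt_const. intros a b; reflexivity.
    + lra.
    + unfold F. destruct (Hg (u - 1)) as [A _]. lra.
    + unfold F. destruct (Hg u) as [A _]. lra.
    + exists (gx z, gy z). split.
      * apply HC. exists z. reflexivity.
      * rewrite HF1, Hu. assert (F z = u) by lra. rewrite H. reflexivity.
Qed.
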